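(* Let $p,p'\ge1$ with $|p-p'|=1$ and let $X=\alpha_{(p,p')}(Y)$ where $Y$ is a Sturmian word in which $bb$ does not occur. Then: (i) $|M_{(X,b)}\cap O_X|=1$; (ii) $|M_{(X,a)}\cap O_X|=(k+1)/2$, where $k$ is the (unique) odd element of $\{p-1,p'-1\}$; (iii) $|M_{(X,aa)}\cap O_X|=k/2$, where $k$ is the (unique) even element of $\{p-1,p'-1\}$; (iv) $|M_X\cap O_X|=\max(p,p')$.
   Context: $\alpha_{(p,p')}$ is the morphism $a\mapsto a^pb$, $b\mapsto a^{p'}b$. A Sturmian word is a right-infinite aperiodic word over $\{a,b\}$ with exactly $n+1$ factors of each length $n$. A palindrome $P$ is maximal in $X$ if $lPl'$ is a factor of $X$ for letters $l\neq l'$ (a maximal occurrence). $M_X$ is the set of distinct maximal palindromes of $X$; $M_{(X,a)}$, $M_{(X,b)}$, $M_{(X,aa)}$ are those whose center (middle letter for odd length, middle two letters for even length) is $a$, $b$, $aa$ respectively. A center occurrence is an occurrence of $a$, $b$ or $aa$. Write $Y=y_1y_2\cdots$, $X=\alpha(y_1)\alpha(y_2)\cdots$, $\alpha(y_j)$ at positions $s_j+1,\dots,s_j+|\alpha(y_j)|$, $s_j=\sum_{t<j}|\alpha(y_t)|$. The reflection of an occurrence $y_j=a$ (resp. $b$) is the center of the run $a^p$ (resp. $a^{p'}$) at positions $s_j+1,\dots,s_j+p$ (resp. $s_j+p'$); the reflection of an occurrence $y_jy_{j+1}=aa$ is the $b$ at position $s_j+p+1$. A center occurrence of $X$ is original if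 it is not the reflection of any center occurrence of $Y$. $O_X$ is the set of original palindromes: maximal palindromes of $X$ having a maximal occurrence whose center occurrence is original. *)

(* Defs.v *)
(* Words over {a,b} are encoded with bool:
   a := false, b := true.  Infinite words are functions nat -> bool,
   positions are 0-indexed (the paper's position q+1 is our q). *)
From mathcomp Require Import all_boot.
Set Implicit Arguments. Unset Strict Implicit. Unset Printing Implicit Defensive.

Definition a : bool := false.
Definition b : bool := true.

Definition occurs_at (X : nat -> bool) (w : seq bool) (i : nat) : Prop :=
  forall j, j < size w -> X (i + j) = nth a w j.

Definition factor (X : nat -> bool) (w : seq bool) : Prop :=
  exists i, occurs_at X w i.

Definition has_card (S : seq bool -> Prop) (n : nat) : Prop :=
  exists s : seq (seq bool), [/\ uniq s, size s = n & forall w, S w <-> w \in s].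

Definition eventually_periodic (X : nat -> bool) : Prop :=
  exists per N, 0 < per /\ forall i, N <= i -> X (i + per) = X i.

Definition sturmian (X : nat -> bool) : Prop :=
  ~ eventually_periodic X /\
  forall n, has_card (fun w => size w = n /\ factor X w) n.+1.

Definition alpha (p p' : nat) (l : bool) : seq bool :=
  if l then rcons (nseq p' a) b else rcons (nseq p a) b.

Definition spos (p p' : nat) (Y : nat -> bool) (j : nat) : nat :=
  \sum_(t < j) size (alpha p p' (Y t)).

(* X = alpha(y_1) alpha(y_2) ... : alpha(y_j) occupies positions s_j, ..., s_j+|alpha(y_j)|-1 *)
Definition is_alpha_image (p p' : nat) (Y X : nat -> bool) : Prop :=
  forall j k, k < size (alpha p p' (Y j)) ->
    X (spos p p' Y j + k) = nth a (alpha p p' (Y j)) k.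

Definition palindrome (w : seq bool) : Prop := rev w = w.

Definition maximal_occ (X : nat -> bool) (P : seq bool) (i : nat) : Prop :=
  0 < i /\ occurs_at X P i /\ X i.-1 <> X (i + size P).

Definition MX (X : nat -> bool) (P : seq bool) : Prop :=
  palindrome P /\ exists i, maximal_occ X P i.

Definition word_center (P : seq bool) : seq bool :=
  let n := size P in
  if odd n then [:: nth a P n./2]
  else if n == 0 then [::] else [:: nth a P n./2.-1; nth a P n./2].

Definition MXc (X : nat -> bool) (c : seq bool) (P : seq bool) : Prop :=
  MX X P /\ word_center P = c.

(* A center occurrence is encoded as (start position, length), length 1 (an
   occurrence of a or b) or 2 (an occurrence of aa). *)
Definition center_occ (X : nat -> bool) (c : nat * nat) : Prop :=
  c.2 = 1 \/ (c.2 = 2 /\ X c.1 = a /\ X c.1.+1 = a).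

(* center occurrence of the factor of length n >= 1 starting at i *)
Definition mid (i n : nat) : nat * nat :=
  if odd n then (i + n./2, 1) else (i + n./2 - 1, 2).

Definition occ_center (i n : nat) : option (nat * nat) :=
  if n == 0 then None else Some (mid i n).

Definition is_reflection (p p' : nat) (Y : nat -> bool) (c : nat * nat) : Prop :=
  exists j,
    (Y j = a /\ c = mid (spos p p' Y j) p) \/
    (Y j = b /\ c = mid (spos p p' Y j) p') \/
    (Y j = a /\ Y j.+1 = a /\ c = (spos p p' Y j + p, 1)).

Definition original (p p' : nat) (Y X : nat -> bool) (c : nat * nat) : Prop :=
  center_occ X c /\ ~ is_reflection p p' Y c.

Definition OX (p p' : nat) (Y X : nat -> bool) (P : seq bool) : Prop :=
  MX X P /\ exists i c, maximal_occ X P i /\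
    occ_center i (size P) = Some c /\ original p p' Y X c.

(* Main.v *)
Require Import Defs.
From mathcomp Require Import all_boot zify.
From Stdlib Require Import Classical.
Set Implicit Arguments. Unset Strict Implicit. Unset Printing Implicit Defensive.


Lemma mid_cases i n : 0 < n -> exists h e, e <= 1 /\ n = 2*h + e + 1 /\ mid i n = (i + h, e.+1).
Proof.
move=> n0; rewrite /mid; have := odd_double_half n; rewrite -muln2.
case: (odd n) => /= H.
- exists n./2, 0; split=>//; split; first lia. by [].
- exists (n./2 - 1), 1; split=>//; split; first lia. congr (_,_); lia.
Qed.

Section S.
Variables (p p' : nat) (Y X : nat -> bool).
Hypothesis HX : is_alpha_image p p' Y X.

Definition qq (l : bool) := if l then p' else p.
Local Notation s := (spos p p' Y).

Lemma size_alpha l : size (alpha p p' l) = (qq l).+1.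
Proof. by case: l; rewrite /alpha size_rcons size_nseq. Qed.

Lemma sposS j : s j.+1 = s j + (qq (Y j)).+1.
Proof. by rewrite /spos big_ord_recr /= size_alpha. Qed.

Lemma spos0 : s 0 = 0.
Proof. by rewrite /spos big_ord0. Qed.

Lemma Xa j t : t < qq (Y j) -> X (s j + t) = a.
Proof.
move=> Ht; rewrite HX; last by rewrite size_alpha; lia.
rewrite /alpha; case: (Y j) Ht => /= Ht; rewrite nth_rcons size_nseq Ht nth_nseq Ht //.
Qed.

Lemma Xb j : X (s j + qq (Y j)) = b.
Proof.
rewrite HX; last by rewrite size_alpha; lia.
rewrite /alpha; case: (Y j) => /=; rewrite nth_rcons size_nseq ltnn eqxx //.
Qed.

Lemma spos_mono j d : s j <= s (j + d).
Proof. elim: d => [|d IH]; first by rewrite addn0. rewrite addnS sposS; lia. Qed.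

Lemma decomp x : exists j t, t <= qq (Y j) /\ x = s j + t.
Proof.
elim: x => [|x [j [t [Ht ->]]]]; first by exists 0, 0; rewrite spos0.
case: (ltnP t (qq (Y j))) => H.
- by exists j, t.+1; split=>//; lia.
- exists j.+1, 0; split=>//; rewrite sposS; lia.
Qed.

Lemma uniq_dec j j' t t' : t <= qq (Y j) -> t' <= qq (Y j') -> s j + t = s j' + t' -> j = j' /\ t = t'.
Proof.
move=> H1 H2 E; case: (ltngtP j j') => Hj.
- have := spos_mono j.+1 (j' - j.+1); rewrite subnKC // sposS; lia.
- have := spos_mono j'.+1 (j - j'.+1); rewrite subnKC // sposS; lia.
- subst; split=>//; lia.
Qed.

Lemma Xprev j : 0 < s j -> X (s j - 1) = b.
Proof.
case: j => [|j]; first by rewrite spos0.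
move=> _; rewrite sposS.
have -> : s j + (qq (Y j)).+1 - 1 = s j + qq (Y j) by lia.
exact: Xb.
Qed.

Lemma spos_pos j : 0 < j -> 0 < s j.
Proof. case: j => // j _; rewrite sposS; lia. Qed.

End S.


Section S2.
Variables (p p' : nat) (Y X : nat -> bool).
Hypothesis HX : is_alpha_image p p' Y X.
Hypotheses (Hp : 0 < p) (Hp' : 0 < p') (Hpp : p = p'.+1 \/ p' = p.+1).
Hypothesis Hbb : forall j, ~ (Y j = b /\ Y j.+1 = b).
Local Notation s := (spos p p' Y).
Local Notation qq := (qq p p').
Definition M := maxn p p'.
Definition m := minn p p'.
Definition W := nseq m a ++ b :: nseq m a.

Lemma nth_W u : nth a W u = (u == m).
Proof.
rewrite /W nth_cat size_nseq nth_nseq; case: ltnP => H.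
- by rewrite /a; apply/esym/negbTE/eqP; lia.
- case E: (u - m) => [|v] /=; first by rewrite /b; apply/esym/eqP; lia.
  by rewrite nth_nseq if_same /a; apply/esym/negbTE/eqP; lia.
Qed.

Lemma size_W : size W = 2 * m + 1.
Proof. rewrite /W size_cat /= !size_nseq; lia. Qed.

Lemma forward P i c : palindrome P -> maximal_occ X P i -> occ_center i (size P) = Some c ->
  original p p' Y X c -> (exists r, 0 < r < M /\ P = nseq r a) \/ P = W.
Proof.
move=> HP [i0 [Hocc Hmax]] Hc [Hco Hnr].
move: Hc; rewrite /occ_center; case: eqP => // /eqP n0 [Ec].
subst c.
have Hpos : 0 < size P by lia.
have [h [e [He [Hn Hmid]]]] := mid_cases i Hpos.
rewrite Hmid in Hco Hnr.
have Xocc u : u < size P -> X (i+u) = nth a P u by move=> Hu; exact: Hocc.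
have pal d : d <= h -> X (i + (h - d)) = X (i + h + e + d).
  move=> Hd; rewrite Xocc; last lia.
  have -> : i + h + e + d = i + (h + e + d) by lia.
  rewrite Xocc; last lia.
  have := nth_rev a (_ : h - d < size P); rewrite HP => -> ; last lia.
  congr nth; lia.
have Hm : X (i - 1) <> X (i + (2 * h + e + 1)) by rewrite -Hn subn1.
have [j [t [Ht Ex]]] := decomp p p' Y (i + h).
have hq : forall l, qq l = p \/ qq l = p' by case; [right|left].
case: (ltnP t (qq (Y j))) => Htq.
-
  have Xx : X (i + h) = a by rewrite Ex Xa.
  have Hte : t + e < qq (Y j).
    case: Hco => /= Hco; first by (have : e = 0 by lia); move=> ->; rewrite addn0.
    have E1 : e = 1 by lia.
    rewrite E1; case: (ltngtP (t.+1) (qq (Y j))) => H; try lia.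
    case: Hco => _ [_ Hx1]; move: Hx1.
    by rewrite Ex -addnS H (Xb HX).
  have LR : t <> qq (Y j) - 1 - e - t.
    move=> E; apply: Hnr; exists j.
    have Hq0 : 0 < qq (Y j) by lia.
    have [h' [e' [He' [Hq' Hmid']]]] := mid_cases (s j) Hq0.
    have Eh : h' = t by lia.
    have Ee : e' = e by lia.
    case Yj: (Y j).
    + right; left; split=>//; rewrite /qq Yj in Hmid'; rewrite Hmid' Eh Ee Ex //.
    + left; split=>//; rewrite /qq Yj in Hmid'; rewrite Hmid' Eh Ee Ex //.
  case: (ltngtP h (minn t (qq (Y j) - 1 - e - t))) => Hh.
  + exfalso; apply: Hm.
    have -> : i - 1 = s j + (t - h - 1) by lia.
    have -> : i + (2 * h + e + 1) = s j + (t + e + h + 1) by lia.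
    rewrite !(Xa HX) //; lia.
  + exfalso.
    case: (ltnP t (qq (Y j) - 1 - e - t)) => H.
    * have Hd : t.+1 <= h by lia.
      have := pal _ Hd.
      have -> : i + (h - t.+1) = s j - 1 by lia.
      rewrite (Xprev HX); last lia.
      have -> : i + h + e + t.+1 = s j + (2 * t + e + 1) by lia.
      rewrite (Xa HX) //; lia.
    * set R := qq (Y j) - 1 - e - t.
      have Hd : R.+1 <= h by lia.
      have := pal _ Hd.
      have -> : i + (h - R.+1) = s j + (t - R.+1) by lia.
      rewrite (Xa HX); last lia.
      have -> : i + h + e + R.+1 = s j + qq (Y j) by lia.
      by rewrite (Xb HX).
  + left; exists (size P); split.
    * apply/andP; split; first lia.
      have : qq (Y j) <= M by rewrite /M; case: (hq (Y j)) => ->; lia.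
      lia.
    * apply: (@eq_from_nth _ a); first by rewrite size_nseq.
      move=> u Hu; rewrite nth_nseq Hu -Xocc //.
      have -> : i + u = s j + (t - h + u) by lia.
      rewrite (Xa HX) //; lia.
-
  have Etq : t = qq (Y j) by lia.
  have Xx : X (i + h) = b by rewrite Ex Etq (Xb HX).
  have E0 : e = 0.
    case: Hco => /= Hco; first lia.
    by case: Hco => _ [Hx _]; rewrite Xx in Hx.
  subst e.
  have Hdiff : Y j <> Y j.+1.
    move=> E; case Yj: (Y j) E => E.
    + exact: (@Hbb j (conj Yj (esym E))).
    + apply: Hnr; exists j; right; right; split=>//; split; first by rewrite -E.
      by rewrite Ex Etq /qq Yj.
  have HQ : (qq (Y j) = p /\ qq (Y j.+1) = p') \/ (qq (Y j) = p' /\ qq (Y j.+1) = p).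
    by move: Hdiff; rewrite /qq; case: (Y j); case: (Y j.+1) => //; [right|left].
  have Hs1 : s j.+1 = i + h + 1 by rewrite (sposS p p' Y); lia.
  have Hhm : h = minn (qq (Y j)) (qq (Y j.+1)).
    case: (ltngtP h (minn (qq (Y j)) (qq (Y j.+1)))) => Hh //; exfalso.
    + apply: Hm.
      have -> : i - 1 = s j + (qq (Y j) - h - 1) by lia.
      have -> : i + (2 * h + 0 + 1) = s j.+1 + h by lia.
      rewrite !(Xa HX) //; lia.
    + case: (ltnP (qq (Y j)) (qq (Y j.+1))) => H.
      * have Hd : (qq (Y j)).+1 <= h by lia.
      have := pal _ Hd.
        have -> : i + (h - (qq (Y j)).+1) = s j - 1 by lia.
        rewrite (Xprev HX); last lia.
        have -> : i + h + 0 + (qq (Y j)).+1 = s j.+1 + qq (Y j) by lia.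
        rewrite (Xa HX) //.
      * have H' : qq (Y j.+1) < qq (Y j) by lia.
        have Hd : (qq (Y j.+1)).+1 <= h by lia.
      have := pal _ Hd.
        have -> : i + (h - (qq (Y j.+1)).+1) = s j + (qq (Y j) - (qq (Y j.+1)).+1) by lia.
        rewrite (Xa HX); last lia.
        have -> : i + h + 0 + (qq (Y j.+1)).+1 = s j.+1 + qq (Y j.+1) by lia.
        by rewrite (Xb HX).
  have Ehm : h = m by rewrite /m; lia.
  right; apply: (@eq_from_nth _ a); first by rewrite size_W; lia.
  move=> u Hu; rewrite nth_W -Xocc //.
  case: (ltngtP u m) => Hum.
  + have -> : i + u = s j + (qq (Y j) - h + u) by lia.
    rewrite (Xa HX) //; lia.
  + have -> : i + u = s j.+1 + (u - h - 1) by lia.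
    rewrite (Xa HX) //; lia.
  + by rewrite Hum -Ehm.
Qed.

End S2.


Section S3.
Variables (p p' : nat) (Y X : nat -> bool).
Hypothesis HX : is_alpha_image p p' Y X.
Hypotheses (Hp : 0 < p) (Hp' : 0 < p') (Hpp : p = p'.+1 \/ p' = p.+1).
Hypothesis Hbb : forall j, ~ (Y j = b /\ Y j.+1 = b).
Hypothesis Hap : ~ eventually_periodic Y.
Local Notation s := (spos p p' Y).
Local Notation qq := (qq p p').
Local Notation M := (M p p').
Local Notation m := (m p p').
Local Notation W := (W p p').

Let nthW := nth_W Hp Hp' Hpp.
Let sizeW := size_W Hp Hp' Hpp.

Lemma exists_letter N l : exists j, N <= j /\ Y j = l.
Proof.
apply: NNPP => H; apply: Hap.
have H1 : forall j, N <= j -> Y j = ~~ l.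
  move=> j Hj; case E: (Y j == l); last by move/negbT: E; case: (Y j) => /=; case: (l).
  by exfalso; apply: H; exists j; split=>//; apply/eqP.
exists 1, N; split=>// i Hi; rewrite !H1 //; lia.
Qed.

Lemma back_a r : 0 < r < M -> MX X (nseq r a) /\ OX p p' Y X (nseq r a).
Proof.
move=> /andP [r0 rM].
have [l Hl] : exists l, qq l = M.
  by rewrite /M /qq; case: (leqP p' p) => H; [exists false | exists true]; lia.
have [j [j1 Yj]] := exists_letter 1 l.
have s1 : 0 < s j by apply: spos_pos.
have Hq : qq (Y j) = M by rewrite Yj.
have Hocc : occurs_at X (nseq r a) (s j).
  move=> u; rewrite size_nseq => Hu; rewrite nth_nseq if_same (Xa HX) //; lia.
have Hpal : palindrome (nseq r a) by rewrite /palindrome rev_nseq.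
have Hmax : maximal_occ X (nseq r a) (s j).
  split=>//; split=>//; rewrite size_nseq -subn1 (Xprev HX) // (Xa HX) //; lia.
split; first by split=>//; exists (s j).
split; first by split=>//; exists (s j).
exists (s j), (mid (s j) r); split=>//; rewrite size_nseq /occ_center.
have -> : (r == 0) = false by apply/negbTE; lia.
split=>//.
have [h [e [He [Hr Hmid]]]] := mid_cases (s j) r0.
rewrite Hmid; split.
- case: (ltnP e 1) => He1; first by left; rewrite /=; lia.
  right; split=>/=; first lia.
  rewrite -addnS !(Xa HX) //; lia.
- move=> [j' [[Yj' E]|[[Yj' E]|[Yj' [_ E]]]]].
  + have p0 : 0 < p by [].
    have [h' [e' [He' [Hr' Hmid']]]] := mid_cases (s j') p0.
    rewrite Hmid' in E; case: E => E1 E2.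
    have S1 : h <= qq (Y j) by rewrite Hq; lia.
    have S2 : h' <= qq (Y j') by rewrite Yj' /qq /a /b /=; lia.
    have [Ej Eh] := uniq_dec S1 S2 E1.
    subst j'; move: Hq; rewrite Yj' /qq /a /b /= => Hq; lia.
  + have p0 : 0 < p' by [].
    have [h' [e' [He' [Hr' Hmid']]]] := mid_cases (s j') p0.
    rewrite Hmid' in E; case: E => E1 E2.
    have S1 : h <= qq (Y j) by rewrite Hq; lia.
    have S2 : h' <= qq (Y j') by rewrite Yj' /qq /a /b /=; lia.
    have [Ej Eh] := uniq_dec S1 S2 E1.
    subst j'; move: Hq; rewrite Yj' /qq /a /b /= => Hq; lia.
  + case: E => E1 E2.
    have S1 : h <= qq (Y j) by rewrite Hq; lia.
    have S2 : p <= qq (Y j') by rewrite Yj' /qq /a /b /=; lia.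
    have [Ej Eh] := uniq_dec S1 S2 E1.
    subst j'; move: Hq; rewrite Yj' /qq /a /b /= => Hq; lia.
Qed.

Lemma back_b : MX X W /\ OX p p' Y X W.
Proof.
have [j [j1 Yj]] := exists_letter 1 b.
have Yj1 : Y j.+1 = a by case E: (Y j.+1) => //; exfalso; exact: (@Hbb j (conj Yj E)).
have s1 : 0 < s j by apply: spos_pos.
have Hq : qq (Y j) = p' by rewrite Yj.
have Hq1 : qq (Y j.+1) = p by rewrite Yj1.
have Hs1 : s j.+1 = s j + p' + 1 by rewrite sposS Hq; lia.
have Em : m = minn p p' by [].
set i := s j + p' - m.
have Hocc : occurs_at X W i.
  move=> u; rewrite sizeW => Hu; rewrite nthW.
  case: (ltngtP u m) => Hum.
  - have -> : i + u = s j + (p' - m + u) by rewrite /i; lia.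
    rewrite (Xa HX) ?Hq //; lia.
  - have -> : i + u = s j.+1 + (u - m - 1) by rewrite /i; lia.
    rewrite (Xa HX) ?Hq1 //; lia.
  - have -> : i + u = s j + qq (Y j) by rewrite /i Hq; lia.
    by rewrite (Xb HX).
have Hpal : palindrome W.
  apply: (@eq_from_nth _ a); first by rewrite size_rev.
  move=> u; rewrite size_rev => Hu; rewrite nth_rev // !nthW sizeW.
  move: Hu; rewrite sizeW => Hu.
  by case: eqP; case: eqP => //; lia.
have Hmax : maximal_occ X W i.
  split; first by rewrite /i; lia.
  split=>//; rewrite sizeW -subn1.
  case: Hpp => Ep.
  - have -> : i - 1 = s j - 1 by rewrite /i; lia.
    have -> : i + (2 * m + 1) = s j.+1 + p' by rewrite /i; lia.
    rewrite (Xprev HX) // (Xa HX) // Hq1; lia.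
  - have -> : i - 1 = s j + 0 by rewrite /i; lia.
    have -> : i + (2 * m + 1) = s j.+1 + qq (Y j.+1) by rewrite /i Hq1; lia.
    rewrite (Xb HX) (Xa HX) // Hq; lia.
split; first by split=>//; exists i.
split; first by split=>//; exists i.
exists i, (s j + p', 1); split=>//; rewrite sizeW /occ_center.
have -> : (2 * m + 1 == 0) = false by apply/negbTE; lia.
have -> : mid i (2 * m + 1) = (s j + p', 1).
  have Hpos : 0 < 2 * m + 1 by lia.
  have [h [e [He [Hr Hmid]]]] := mid_cases i Hpos.
  rewrite Hmid; congr (_,_); rewrite /i; lia.
split=>//; split; first by left.
have Xx : X (s j + p') = b by have := Xb HX j; rewrite Hq.
move=> [j' [[Yj' E]|[[Yj' E]|[Yj' [_ E]]]]].
- have p0 : 0 < p by [].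
  have [h' [e' [He' [Hr' Hmid']]]] := mid_cases (s j') p0.
  rewrite Hmid' in E; case: E => E1 E2.
  move: Xx; rewrite E1 (Xa HX) // Yj' /qq /a /=; lia.
- have p0 : 0 < p' by [].
  have [h' [e' [He' [Hr' Hmid']]]] := mid_cases (s j') p0.
  rewrite Hmid' in E; case: E => E1 E2.
  move: Xx; rewrite E1 (Xa HX) // Yj' /qq /b /=; lia.
- case: E => E1.
  have S1 : p' <= qq (Y j) by rewrite Hq.
  have S2 : p <= qq (Y j') by rewrite Yj' /qq /a /=.
  have [Ej _] := uniq_dec S1 S2 E1.
  by subst j'; rewrite Yj in Yj'.
Qed.

End S3.


Lemma oddE n : odd n = (n %% 2 == 1).
Proof. by rewrite modn2; case: odd. Qed.

Lemma wc_nseq r : word_center (nseq r a) = if odd r then [:: a] else if r == 0 then [::] else [:: a; a].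
Proof. by rewrite /word_center size_nseq !nth_nseq !if_same. Qed.

Lemma wc_W p p' : 0 < p -> 0 < p' -> (p = p'.+1 \/ p' = p.+1) -> word_center (W p p') = [:: b].
Proof.
move=> Hp Hp' Hpp; rewrite /word_center (size_W Hp Hp' Hpp).
have -> : odd (2 * m p p' + 1) by rewrite oddE; apply/eqP; lia.
rewrite (nth_W Hp Hp' Hpp); congr [:: _]; rewrite /b; apply/eqP; rewrite -divn2; lia.
Qed.

Lemma mem_map_iota (f : nat -> seq bool) K w : w \in [seq f t | t <- iota 0 K] <-> exists t, t < K /\ w = f t.
Proof.
split.
- by move/mapP=> [t]; rewrite mem_iota => /andP [_ Ht] ->; exists t; split=>//; lia.
- move=> [t [Ht ->]]; apply/mapP; exists t=>//; rewrite mem_iota; lia.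
Qed.

Lemma uniq_map_nseq (g : nat -> nat) K : injective g -> uniq [seq nseq (g t) a | t <- iota 0 K].
Proof.
move=> Hg; rewrite map_inj_uniq ?iota_uniq // => t1 t2 E.
by apply: Hg; have := congr1 size E; rewrite !size_nseq.
Qed.

Theorem lemma5 (p p' : nat) (Y X : nat -> bool) :
  0 < p -> 0 < p' -> (p = p'.+1 \/ p' = p.+1) ->
  sturmian Y -> (forall j, ~ (Y j = b /\ Y j.+1 = b)) ->
  is_alpha_image p p' Y X ->
  [/\ has_card (fun P => MXc X [:: b] P /\ OX p p' Y X P) 1,
      (forall k, (k = p - 1 \/ k = p' - 1) -> odd k ->
         has_card (fun P => MXc X [:: a] P /\ OX p p' Y X P) (k.+1 %/ 2)),
      (forall k, (k = p - 1 \/ k = p' - 1) -> ~~ odd k ->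
         has_card (fun P => MXc X [:: a; a] P /\ OX p p' Y X P) (k %/ 2)) &
      has_card (fun P => MX X P /\ OX p p' Y X P) (maxn p p')].
Proof.
move=> Hp Hp' Hpp [Hap _] Hbb HX.
have char : forall P, MX X P /\ OX p p' Y X P <->
    (exists r, 0 < r < M p p' /\ P = nseq r a) \/ P = W p p'.
  move=> P; split.
  - move=> [[HP _] [_ [i [c [Hmo [Hc Hor]]]]]].
    exact: (forward HX Hp Hp' Hpp Hbb HP Hmo Hc Hor).
  - move=> [[r [Hr ->]]| ->].
    + exact: (back_a HX Hp Hp' Hpp Hbb Hap).
    + exact: (back_b HX Hp Hp' Hpp Hbb Hap).
have wcW := wc_W Hp Hp' Hpp.
have HM : M p p' = maxn p p' by [].
split.
- exists [:: W p p']; split=>// P; rewrite mem_seq1; split.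
  + move=> [[HMX Hc] HO]; have [[r [Hr EP]]|->] := (char P).1 (conj HMX HO); last by [].
    by move: Hc; rewrite EP wc_nseq; case: odd => //; case: eqP.
  + move/eqP=> ->; have [HMX HO] := back_b HX Hp Hp' Hpp Hbb Hap; split=>//; split=>//.
- move=> k Hk Hodd; move: Hodd; rewrite oddE => /eqP Hodd.
  exists [seq nseq (2 * t + 1) a | t <- iota 0 (k.+1 %/ 2)]; split.
  + by apply: uniq_map_nseq => t1 t2; lia.
  + by rewrite size_map size_iota.
  + move=> P; rewrite mem_map_iota; split.
    * move=> [[HMX Hc] HO]; have [[r [Hr EP]]|EP] := (char P).1 (conj HMX HO); last first.
        by move: Hc; rewrite EP wcW.
      move: Hc; rewrite EP wc_nseq oddE; case: eqP => Hr2; last by case: eqP.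
      move=> _.
      exists (r %/ 2); split; last by congr nseq; lia.
      move: Hr; rewrite HM; lia.
    * move=> [t [Ht ->]].
      have Hr : 0 < 2 * t + 1 < M p p' by rewrite HM; lia.
      have [HMX HO] := back_a HX Hp Hp' Hpp Hbb Hap Hr; split=>//; split=>//.
      by rewrite wc_nseq oddE; case: eqP => //; lia.
- move=> k Hk Hodd; move: Hodd; rewrite oddE => /eqP Hodd.
  exists [seq nseq (2 * t + 2) a | t <- iota 0 (k %/ 2)]; split.
  + by apply: uniq_map_nseq => t1 t2; lia.
  + by rewrite size_map size_iota.
  + move=> P; rewrite mem_map_iota; split.
    * move=> [[HMX Hc] HO]; have [[r [Hr EP]]|EP] := (char P).1 (conj HMX HO); last first.
        by move: Hc; rewrite EP wcW.
      move: Hc; rewrite EP wc_nseq oddE; case: eqP => Hr2 //; case: eqP => Hr0 // _.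
      exists (r %/ 2 - 1); split; last by congr nseq; lia.
      move: Hr; rewrite HM; lia.
    * move=> [t [Ht ->]].
      have Hr : 0 < 2 * t + 2 < M p p' by rewrite HM; lia.
      have [HMX HO] := back_a HX Hp Hp' Hpp Hbb Hap Hr; split=>//; split=>//.
      rewrite wc_nseq oddE; case: eqP => //; first lia.
      by case: eqP => //; lia.
- exists ([seq nseq (t + 1) a | t <- iota 0 (M p p').-1] ++ [:: W p p']); split.
  + rewrite cat_uniq uniq_map_nseq /=; last by move=> t1 t2; lia.
    rewrite andbT orbF; apply/negP => /mem_map_iota [t [_ E]].
    have := congr1 (fun w => nth a w (m p p')) E.
    rewrite /= (nth_W Hp Hp' Hpp) eqxx nth_nseq if_same //.
  + rewrite size_cat size_map size_iota /= HM; lia.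
  + move=> P; rewrite mem_cat mem_seq1 char; split.
    * move=> [[r [Hr ->]]| ->]; last by rewrite eqxx orbT.
      apply/orP; left; apply/mem_map_iota; exists (r - 1); split; first lia.
      congr nseq; lia.
    * move/orP => [/mem_map_iota [t [Ht ->]]| /eqP ->]; last by right.
      left; exists (t + 1); split=>//; lia.
Qed.
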